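(* Let $a>0$, $b>0$, $G_\beta(x,y)=\left(y,-x+\frac{y}{\beta+y^2}\right)$ for $\beta>0$, and $G_{b,a}=G_b\circ G_a$. Then $G_{b,a}$ has points of (minimal) period $2$ if and only if $0<ab<1/16$. Moreover, in that case the set of points of period $2$ is the level set $\{V_{b,a}(x,y)=-ab\}$, which consists of two ovals, where $V_{b,a}(x,y)=ax^2+by^2-xy+x^2y^2$. *)

(* Defs.v *)
From Stdlib Require Import Reals.
Open Scope R_scope.

Definition G (beta : R) (p : R * R) : R * R :=
  (snd p, - fst p + snd p / (beta + (snd p) ^ 2)).

Definition Gba (b a : R) (p : R * R) : R * R := G b (G a p).

Definition period2 (b a : R) (p : R * R) : Prop :=
  Gba b a (Gba b a p) = p /\ Gba b a p <> p.

Definition V (b a : R) (x y : R) : R :=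
  a * x ^ 2 + b * y ^ 2 - x * y + x ^ 2 * y ^ 2.

(* An oval: a simple closed curve in R^2, i.e. the image of a continuous
   1-periodic map R -> R^2 that is injective on [0,1). *)
Definition oval (C : R -> R -> Prop) : Prop :=
  exists fx fy : R -> R,
    (forall t, continuity_pt fx t /\ continuity_pt fy t) /\
    (forall t, fx (t + 1) = fx t /\ fy (t + 1) = fy t) /\
    (forall s t, 0 <= s < 1 -> 0 <= t < 1 -> fx s = fx t -> fy s = fy t -> s = t) /\
    (forall x y, C x y <-> exists t, fx t = x /\ fy t = y).

(* Main.v *)
Require Import Defs.
From Stdlib Require Import Reals Lra Psatz.
Open Scope R_scope.

Lemma V_iff (a b x y : R) : V b a x y = - (a * b) <-> (x^2+b)*(y^2+a) = x*y.
Proof. unfold V; split; intros; nra. Qed.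

Lemma frac_eq (k u v : R) : 0 < k -> u/(k+u^2) = v/(k+v^2) -> (u-v)*(k-u*v) = 0.
Proof.
  intros hk h.
  assert (h1 : 0 < k + u^2) by nra. assert (h2 : 0 < k + v^2) by nra.
  apply (Rmult_eq_compat_r ((k+u^2)*(k+v^2))) in h.
  replace (u / (k + u ^ 2) * ((k + u ^ 2) * (k + v ^ 2))) with (u*(k+v^2)) in h by (field; lra).
  replace (v / (k + v ^ 2) * ((k + u ^ 2) * (k + v ^ 2))) with (v*(k+u^2)) in h by (field; lra).
  nra.
Qed.

Lemma Gba_V (a b x y : R) : 0 < a -> 0 < b -> (x^2+b)*(y^2+a) = x*y ->
  Gba b a (x,y) = (b/x, a/y).
Proof.
  intros ha hb h.
  assert (hx : x <> 0) by (intro e; subst; nra).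
  assert (hy : y <> 0) by (intro e; subst; nra).
  unfold Gba, G; cbn [fst snd].
  assert (ha2 : 0 < a + y^2) by nra.
  assert (e1 : - x + y / (a + y ^ 2) = b / x).
  { field_simplify_eq; [nra | lra ]. }
  rewrite e1. f_equal.
  assert (hb2 : 0 < b + x^2) by nra.
  replace (b / x / (b + (b / x) ^ 2)) with (x / (b + x^2)) by (field; repeat split; nra).
  field_simplify_eq; [nra | lra ].
Qed.

Lemma per2_V (a b x y : R) : 0 < a -> 0 < b -> period2 b a (x,y) -> (x^2+b)*(y^2+a) = x*y.
Proof.
  intros ha hb [H1 H2].
  set (x1 := - x + y / (a + y ^ 2)).
  set (y1 := - y + x1 / (b + x1 ^ 2)).
  assert (E : Gba b a (x,y) = (x1,y1)) by reflexivity.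
  rewrite E in H1, H2.
  unfold Gba, G in H1; cbn [fst snd] in H1.
  pose proof (f_equal fst H1) as e1; pose proof (f_equal snd H1) as e2; cbn [fst snd] in e1, e2.
  rewrite e1 in e2.
  assert (f1 : y/(a+y^2) = y1/(a+y1^2)).
  { assert (x1 = - x + y / (a + y ^ 2)) by reflexivity. lra. }
  assert (f2 : x1/(b+x1^2) = x/(b+x^2)).
  { assert (y1 = - y + x1 / (b + x1 ^ 2)) by reflexivity. lra. }
  apply frac_eq in f1; auto. apply frac_eq in f2; auto.
  assert (ha2 : 0 < a + y^2) by nra. assert (hb2 : 0 < b + x^2) by nra.
  destruct (Rmult_integral _ _ f2) as [g|g].
  - assert (ex : x1 = x) by lra.
    destruct (Rmult_integral _ _ f1) as [h|h].
    + exfalso; apply H2. f_equal; lra.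
    + assert (ey : y1 = - y + x / (b + x ^ 2)) by (unfold y1; rewrite ex; reflexivity).
      rewrite ey in h.
      assert (h' : a + y^2 = x*y/(b+x^2)) by (field_simplify_eq; [field_simplify_eq in h; [nra|lra] | lra]).
      replace (y^2+a) with (a+y^2) by ring; rewrite h'. field. lra.
  - assert (ex : x1 = - x + y / (a + y ^ 2)) by reflexivity.
    rewrite ex in g.
    assert (h' : x^2 + b = x*y/(a+y^2)) by (field_simplify_eq; [field_simplify_eq in g; [nra|lra] | lra]).
    rewrite h'. field. lra.
Qed.

Lemma V_per2 (a b x y : R) : 0 < a -> 0 < b -> a*b <> 1/16 -> (x^2+b)*(y^2+a) = x*y -> period2 b a (x,y).
Proof.
  intros ha hb hab h.
  assert (hx : x <> 0) by (intro e; subst; nra).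
  assert (hy : y <> 0) by (intro e; subst; nra).
  unfold period2. rewrite (Gba_V a b x y); auto. split.
  - rewrite Gba_V; auto.
    + f_equal; field; split; auto; lra.
    + replace ((b/x)^2+b) with (b/x^2*(b+x^2)) by (field; auto).
      replace ((a/y)^2+a) with (a/y^2*(a+y^2)) by (field; auto).
      replace (b/x*(a/y)) with (a*b/(x*y)) by (field; auto).
      replace (b / x ^ 2 * (b + x ^ 2) * (a / y ^ 2 * (a + y ^ 2))) with (a*b*((x^2+b)*(y^2+a))/(x^2*y^2)) by (field; auto).
      rewrite h. field. auto.
  - intro e. pose proof (f_equal fst e) as e1; pose proof (f_equal snd e) as e2; cbn [fst snd] in e1, e2.
    assert (x^2 = b) by (assert (hh : b = x * (b/x)) by (field; auto); rewrite e1 in hh; nra).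
    assert (y^2 = a) by (assert (hh : a = y * (a/y)) by (field; auto); rewrite e2 in hh; nra).
    apply hab.
    assert (hxy : (x*y)^2 = a*b) by nra.
    assert (x*y = 4*a*b) by nra.
    assert (hz : a*b*(16*(a*b)-1)=0) by nra.
    destruct (Rmult_integral _ _ hz); nra.
Qed.

Lemma sq_pos (x : R) : x <> 0 -> 0 < x^2.
Proof. intros h. pose proof (Rsqr_pos_lt x h). unfold Rsqr in *. nra. Qed.

Lemma bound (a b x y : R) : 0 < a -> 0 < b -> (x^2+b)*(y^2+a) = x*y -> ~(x^2=b /\ y^2=a) -> a*b < 1/16.
Proof.
  intros ha hb h hn.
  assert (hx : x <> 0) by (intro e; subst; nra).
  assert (hy : y <> 0) by (intro e; subst; nra).
  assert (E: (x*y)^2*(1-16*(a*b)) = 4*b*x^2*(y^2-a)^2 + 4*a*y^2*(x^2-b)^2 + (x^2-b)^2*(y^2-a)^2).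
  { assert (hh : (x*y)^2 = ((x^2+b)*(y^2+a))^2) by (rewrite h; auto). transitivity (((x^2+b)*(y^2+a))^2 - 16*(a*b)*(x*y)^2). { rewrite <- hh. ring. } ring. }
  assert (hxy : 0 < (x*y)^2) by (apply sq_pos; intro e; destruct (Rmult_integral _ _ e); auto).
  assert (0 < 4*b*x^2*(y^2-a)^2 + 4*a*y^2*(x^2-b)^2 + (x^2-b)^2*(y^2-a)^2).
  { assert (0 < x^2) by (apply sq_pos; auto). assert (0 < y^2) by (apply sq_pos; auto).
    destruct (Req_dec (x^2) b) as [e|e].
    - assert (y^2 <> a) by tauto. assert (0 < (y^2-a)^2) by (apply sq_pos; lra).
      assert (0 < 4*b*x^2*(y^2-a)^2) by (apply Rmult_lt_0_compat; [|lra]; apply Rmult_lt_0_compat; lra).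
      assert (0 <= 4*a*y^2*(x^2-b)^2) by (apply Rmult_le_pos; [nra| apply pow2_ge_0]).
      assert (0 <= (x^2-b)^2*(y^2-a)^2) by (apply Rmult_le_pos; apply pow2_ge_0). lra.
    - assert (0 < (x^2-b)^2) by (apply sq_pos; lra).
      assert (0 < 4*a*y^2*(x^2-b)^2) by (apply Rmult_lt_0_compat; [|lra]; apply Rmult_lt_0_compat; lra).
      assert (0 <= 4*b*x^2*(y^2-a)^2) by (apply Rmult_le_pos; [nra| apply pow2_ge_0]).
      assert (0 <= (x^2-b)^2*(y^2-a)^2) by (apply Rmult_le_pos; apply pow2_ge_0). lra. }
  nra.
Qed.

Definition Xf c k t := c + k * cos(2*PI*t).
Definition Rf al b x := 2*al*(x + 2*al*(x^2+b)).
Definition Yf al b c k t := (Xf c k t + k * sin(2*PI*t) * sqrt (Rf al b (Xf c k t))) / (2*(Xf c k t ^2 + b)).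
Definition Hyp a b al c k := 0<a /\ 0<b /\ 0<al /\ al^2 = a /\ 0<k /\ k < c /\
  forall x, x - 2*al*(x^2+b) = 2*al*(k^2-(x-c)^2).

Lemma X_pos a b al c k t : Hyp a b al c k -> 0 < Xf c k t.
Proof.
  intros (ha&hb&hal&hala&hk&hkc&hI). unfold Xf.
  pose proof (COS_bound (2*PI*t)). nra.
Qed.

Lemma R_pos a b al c k x : Hyp a b al c k -> 0 < x -> 0 < Rf al b x.
Proof.
  intros (ha&hb&hal&hala&hk&hkc&hI) hx. unfold Rf.
  assert (0 < x^2 + b) by nra. nra.
Qed.

Lemma on_curve a b al c k t : Hyp a b al c k ->
  (Xf c k t ^2 + b) * (Yf al b c k t ^2 + a) = Xf c k t * Yf al b c k t.
Proof.
  intros H. pose proof (X_pos _ _ _ _ _ t H) as hx.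
  pose proof (R_pos _ _ _ _ _ _ H hx) as hR.
  destruct H as (ha&hb&hal&hala&hk&hkc&hI).
  unfold Yf.
  set (x := Xf c k t) in *.
  set (S := k * sin (2 * PI * t) * sqrt (Rf al b x)).
  assert (hq : 0 < x^2 + b) by nra.
  assert (hS : S^2 = x^2 - 4*a*(x^2+b)^2).
  { unfold S. 
    replace ((k * sin (2 * PI * t) * sqrt (Rf al b x))^2) with (k^2 * sin (2 * PI * t)^2 * (sqrt (Rf al b x))^2) by ring.
    rewrite <- Rsqr_pow2 with (x := sqrt _). rewrite Rsqr_sqrt by lra.
    assert (hc : x - c = k * cos (2*PI*t)) by (unfold x, Xf; ring).
    pose proof (hI x) as hIx. rewrite hc in hIx.
    pose proof (sin2_cos2 (2*PI*t)) as hsc. unfold Rsqr in hsc.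
    set (sn := sin (2*PI*t)) in *. set (cs := cos (2*PI*t)) in *.
    assert (e : 2*al*(k^2*sn^2) = x - 2*al*(x^2+b)).
    { rewrite hIx. replace (sn^2) with (1 - cs^2) by (simpl; lra). ring. }
    unfold Rf. rewrite <- hala.
    transitivity ((2*al*(k^2*sn^2))*(x + 2*al*(x^2+b))); [ring|]. rewrite e. ring. }
  field_simplify_eq; [| lra].
  nra.
Qed.

Lemma angle (co si : R) : co^2 + si^2 = 1 -> exists th, cos th = co /\ sin th = si.
Proof.
  intros h.
  assert (hb : -1 <= co <= 1) by (split; nra).
  assert (hs : sqrt (1 - co²) = Rabs si).
  { rewrite <- sqrt_Rsqr_abs. f_equal. unfold Rsqr. simpl in h. lra. }
  destruct (Rle_dec 0 si) as [p|p].
  - exists (acos co). rewrite cos_acos, sin_acos by auto. rewrite hs, Rabs_pos_eq; auto.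
  - exists (- acos co). rewrite cos_neg, sin_neg, cos_acos, sin_acos by auto.
    rewrite hs, Rabs_left by lra. split; auto; ring.
Qed.

Lemma surj a b al c k x y : Hyp a b al c k -> 0 < x -> (x^2+b)*(y^2+a) = x*y ->
  exists t, Xf c k t = x /\ Yf al b c k t = y.
Proof.
  intros H hx h.
  pose proof (R_pos _ _ _ _ _ _ H hx) as hR.
  destruct H as (ha&hb&hal&hala&hk&hkc&hI).
  assert (hq : 0 < x^2 + b) by nra.
  set (q := x^2+b) in *.
  set (r := sqrt (Rf al b x)).
  assert (hr : 0 < r) by (apply sqrt_lt_R0; auto).
  assert (hr2 : r^2 = Rf al b x) by (unfold r; rewrite <- Rsqr_pow2; apply Rsqr_sqrt; lra).
  set (co := (x - c)/k). set (si := (2*q*y - x)/(k*r)).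
  assert (e1 : (2*q*y - x)^2 = x^2 - 4*a*q^2).
  { transitivity (4*q*(q*y^2) - 4*q*(x*y) + x^2); [ring|].
    replace (q*y^2) with (x*y - a*q) by (rewrite <- h; ring). ring. }
  assert (hn : co^2 + si^2 = 1).
  { unfold co, si. 
    assert (e2 : x^2 - 4*a*q^2 = (x - 2*al*q)*(x+2*al*q)) by (rewrite <- hala; ring).
    pose proof (hI x) as hIx. fold q in hIx.
    replace (((2*q*y - x)/(k*r))^2) with ((2*q*y-x)^2/(k^2*r^2)) by (field; lra).
    rewrite e1, e2, hr2, hIx. unfold Rf. fold q. field.
    split; [nra|]. split; lra. }
  destruct (angle co si hn) as [th [hc hs]].
  exists (th / (2*PI)).
  assert (hpi : 0 < PI) by apply PI_RGT_0.
  replace (2*PI*(th/(2*PI))) with th by (field; lra).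
  assert (hX : Xf c k (th / (2*PI)) = x).
  { unfold Xf. replace (2*PI*(th/(2*PI))) with th by (field; lra). rewrite hc. unfold co. field. lra. }
  split; auto.
  unfold Yf. rewrite hX. replace (2*PI*(th/(2*PI))) with th by (field; lra). rewrite hs.
  fold r. fold q. unfold si. field. split; lra.
Qed.

Lemma trig_inj u v : 0 <= u < 2*PI -> 0 <= v < 2*PI -> cos u = cos v -> sin u = sin v -> u = v.
Proof.
  intros hu hv hc hs.
  assert (h1 : cos (u - v) = 1).
  { rewrite cos_minus, hc, hs. pose proof (sin2_cos2 v). unfold Rsqr in *. lra. }
  replace (u - v) with (2 * ((u - v)/2)) in h1 by field.
  rewrite cos_2a_sin in h1.
  assert (h2 : sin ((u-v)/2) = 0) by nra.
  destruct (Rtotal_order ((u-v)/2) 0) as [l|[e|g]].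
  - assert (sin ((u-v)/2) < 0) by (apply sin_lt_0_var; lra). lra.
  - lra.
  - assert (0 < sin ((u-v)/2)) by (apply sin_gt_0; lra). lra.
Qed.

Lemma inj a b al c k s t : Hyp a b al c k -> 0 <= s < 1 -> 0 <= t < 1 ->
  Xf c k s = Xf c k t -> Yf al b c k s = Yf al b c k t -> s = t.
Proof.
  intros H hs ht ex ey.
  pose proof (X_pos _ _ _ _ _ t H) as hx.
  pose proof (R_pos _ _ _ _ _ _ H hx) as hR.
  destruct H as (ha&hb&hal&hala&hk&hkc&hI).
  assert (hpi : 0 < PI) by apply PI_RGT_0.
  assert (hc : cos (2*PI*s) = cos (2*PI*t)).
  { unfold Xf in ex. apply (Rmult_eq_reg_l k); lra. }
  unfold Yf in ey. rewrite ex in ey.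
  set (x := Xf c k t) in *.
  assert (hq : 0 < x^2 + b) by nra.
  assert (hr : 0 < sqrt (Rf al b x)) by (apply sqrt_lt_R0; auto).
  assert (hsn : sin (2*PI*s) = sin (2*PI*t)).
  { apply (Rmult_eq_reg_r (k * sqrt (Rf al b x))); [| apply Rgt_not_eq; apply Rmult_lt_0_compat; lra].
    assert (hd : forall u v, u/(2*(x^2+b)) = v/(2*(x^2+b)) -> u = v).
    { intros u v e. replace u with (u/(2*(x^2+b)) * (2*(x^2+b))) by (field; lra).
      rewrite e. field. lra. }
    apply hd in ey. lra. }
  assert (2*PI*s = 2*PI*t) by (apply trig_inj; auto; nra).
  nra.
Qed.

Lemma per (b al c k t : R) : Xf c k (t+1) = Xf c k t /\ Yf al b c k (t+1) = Yf al b c k t.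
Proof.
  assert (hc : cos (2*PI*(t+1)) = cos (2*PI*t)).
  { replace (2*PI*(t+1)) with (2*PI*t + 2*PI) by ring. rewrite cos_plus, cos_2PI, sin_2PI. ring. }
  assert (hs : sin (2*PI*(t+1)) = sin (2*PI*t)).
  { replace (2*PI*(t+1)) with (2*PI*t + 2*PI) by ring. rewrite sin_plus, cos_2PI, sin_2PI. ring. }
  assert (hX : Xf c k (t+1) = Xf c k t) by (unfold Xf; rewrite hc; auto).
  split; auto. unfold Yf. rewrite hX, hs. auto.
Qed.

From Coquelicot Require Import Coquelicot.

Lemma cont a b al c k t : Hyp a b al c k ->
  continuity_pt (Xf c k) t /\ continuity_pt (Yf al b c k) t.
Proof.
  intros H.
  pose proof (X_pos _ _ _ _ _ t H) as hx.
  pose proof (R_pos _ _ _ _ _ _ H hx) as hR.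
  destruct H as (ha&hb&hal&hala&hk&hkc&hI).
  split; apply continuity_pt_filterlim.
  - apply (ex_derive_continuous (Xf c k)). unfold Xf. auto_derive. auto.
  - apply (ex_derive_continuous (Yf al b c k)). unfold Yf. unfold Rf in *. unfold Xf in *. auto_derive.
    set (X := c + k * cos (2*PI*t)) in *.
    replace (X*(X*1)) with (X^2) by ring.
    assert (0 < X^2 + b) by nra.
    split; [lra | split; [lra | auto]].
Qed.

Lemma mkHyp a b : 0 < a -> 0 < b -> a*b < 1/16 ->
  Hyp a b (sqrt a) (1/(4*sqrt a)) (sqrt(1-16*(a*b))/(4*sqrt a)).
Proof.
  intros ha hb hab.
  assert (hal : 0 < sqrt a) by (apply sqrt_lt_R0; auto).
  assert (hal2 : sqrt a ^2 = a) by (rewrite <- Rsqr_pow2; apply Rsqr_sqrt; lra).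
  assert (hde : 0 < sqrt (1-16*(a*b))) by (apply sqrt_lt_R0; lra).
  assert (hde2 : sqrt (1-16*(a*b)) ^2 = 1-16*(a*b)) by (rewrite <- Rsqr_pow2; apply Rsqr_sqrt; lra).
  set (al := sqrt a) in *. set (de := sqrt (1-16*(a*b))) in *.
  assert (hde1 : de < 1) by nra.
  unfold Hyp. repeat split; auto.
  - apply Rdiv_lt_0_compat; lra.
  - apply Rmult_lt_compat_r; [apply Rinv_0_lt_compat; lra | lra].
  - intros x. field_simplify_eq; [| lra].
    rewrite hde2, hal2. ring.
Qed.

Theorem lemma5 (a b : R) (ha : 0 < a) (hb : 0 < b) :
  ((exists p : R * R, period2 b a p) <-> 0 < a * b < 1 / 16) /\
  (0 < a * b < 1 / 16 ->
     (forall x y : R, period2 b a (x, y) <-> V b a x y = - (a * b)) /\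
     exists C1 C2 : R -> R -> Prop,
       oval C1 /\ oval C2 /\
       (forall x y, ~ (C1 x y /\ C2 x y)) /\
       (forall x y, V b a x y = - (a * b) <-> C1 x y \/ C2 x y)).
Proof.
  assert (P1 : (exists p, period2 b a p) -> 0 < a*b < 1/16).
  { intros [[x y] hp]. pose proof (per2_V a b x y ha hb hp) as h. split; [nra|].
    apply (bound a b x y); auto. intros [e1 e2]. destruct hp as [_ hn]. apply hn.
    assert (x<>0) by (intro; subst; nra). assert (y<>0) by (intro; subst; nra).
    rewrite Gba_V by auto. f_equal; [rewrite <- e1 | rewrite <- e2]; field; auto. }
  assert (P2 : forall x y, 0 < a*b < 1/16 -> (period2 b a (x,y) <-> V b a x y = -(a*b))).
  { intros x y hab; rewrite V_iff; split; [apply per2_V; auto | apply V_per2; auto; lra]. }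
  split; [split; [exact P1|] |].
  - intros hab. pose proof (mkHyp a b ha hb (proj2 hab)) as H.
    set (al := sqrt a) in *. set (c := 1/(4*al)) in *. set (k := sqrt (1-16*(a*b))/(4*al)) in *.
    exists (Xf c k 0, Yf al b c k 0). apply P2; auto. apply V_iff. apply (on_curve a b al c k 0 H).
  - intros hab. split; [intros; apply P2; auto|].
    pose proof (mkHyp a b ha hb (proj2 hab)) as H.
    set (al := sqrt a) in *. set (c := 1/(4*al)) in *. set (k := sqrt (1-16*(a*b))/(4*al)) in *.
    exists (fun x y => exists t, Xf c k t = x /\ Yf al b c k t = y),
           (fun x y => exists t, - Xf c k t = x /\ - Yf al b c k t = y).
    split; [|split; [|split]].
    + exists (Xf c k), (Yf al b c k). split; [|split; [|split]].
      * intros t; apply (cont a b al c k t H).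
      * intros t; apply per.
      * intros s t hs ht e1 e2. apply (inj a b al c k s t H hs ht e1 e2).
      * intros x y; tauto.
    + exists (fun t => - Xf c k t), (fun t => - Yf al b c k t). split; [|split; [|split]].
      * intros t; destruct (cont a b al c k t H); split; apply continuity_pt_opp; auto.
      * intros t; destruct (per b al c k t) as [e1 e2]; rewrite e1, e2; auto.
      * intros s t hs ht e1 e2. apply (inj a b al c k s t H hs ht); lra.
      * intros x y; tauto.
    + intros x y [[t1 [e1 _]] [t2 [e2 _]]].
      pose proof (X_pos _ _ _ _ _ t1 H). pose proof (X_pos _ _ _ _ _ t2 H). lra.
    + intros x y. rewrite V_iff. split.
      * intros h. assert (hx : x <> 0) by (intro; subst; nra).
        destruct (Rtotal_order x 0) as [l|[e|g]]; [| contradiction |].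
        -- right. destruct (surj a b al c k (-x) (-y) H) as [t [e1 e2]]; [lra | nra |].
           exists t; split; lra.
        -- left. apply (surj a b al c k x y H g h).
      * intros [[t [e1 e2]]|[t [e1 e2]]]; subst.
        -- apply (on_curve a b al c k t H).
        -- pose proof (on_curve a b al c k t H). nra.
Qed.
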